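(* Let $G$ be a finite group, $\xi$ a linear character of $G$, $\varepsilon$ the trivial or sign character of $S_2$, and $\xi\otimes\varepsilon$ the linear character $(g,g;\sigma)\mapsto\xi(g)\varepsilon(\sigma)$ of $HG_1=\{(g,g;\sigma)\mid g\in G,\sigma\in S_2\}\subset SG_2=G\wr S_2$. For $z\in SG_2$ put $K_z=\sum_{x,y\in HG_1}(\xi\otimes\varepsilon)(xy)\,xzy\in\mathbb{C}SG_2$. Then for $g\in G$ and $\sigma\in S_2$, $K_{(1,g;\sigma)}=0$ if and only if $\xi(g)=-1$ and $C_g=C_{g^{-1}}$.
   Context: $G\wr S_2=\{(g_1,g_2;\sigma)\}$ with multiplication $(g_1,g_2;\sigma)(h_1,h_2;\tau)=(g_1h_{\sigma^{-1}(1)},g_2h_{\sigma^{-1}(2)};\sigma\tau)$. $C_g$ denotes the conjugacy class of $g$ in $G$. *)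

(* Defs.v *)
From HB Require Import structures.
From mathcomp Require Import all_boot all_order all_algebra all_fingroup all_solvable all_field all_character.
Set Implicit Arguments. Unset Strict Implicit. Unset Printing Implicit Defensive.
Import GRing.Theory Num.Theory.
Local Open Scope ring_scope.

(* Elements of the wreath product G wr S_2 are triples (g1, g2; sigma),
   with sigma : bool, true meaning the transposition of S_2. *)
Definition wprod (gT : finGroupType) : finType := (gT * gT * bool)%type.

(* (g1,g2;s)(h1,h2;t) = (g1 h_{s^-1(1)}, g2 h_{s^-1(2)}; s t) *)
Definition wmul (gT : finGroupType) (a b : wprod gT) : wprod gT :=
  let: (g1, g2, s) := a in
  let: (h1, h2, t) := b in
  if s then ((g1 * h2)%g, (g2 * h1)%g, addb s t)
       else ((g1 * h1)%g, (g2 * h2)%g, addb s t).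

Definition hchar (gT : finGroupType) (G : {group gT}) (xi : 'CF(G))
  (eps : bool -> algC) (x : wprod gT) : algC := xi x.1.1 * eps x.2.

(* K_z = sum_{x,y in HG_1} (xi (x) eps)(xy) xzy, as an element of the group
   algebra, i.e. as its coefficient function on G wr S_2. *)
Definition Kelt (gT : finGroupType) (G : {group gT}) (xi : 'CF(G))
  (eps : bool -> algC) (z : wprod gT) : {ffun wprod gT -> algC} :=
  [ffun w => \sum_(g in G) \sum_(s : bool) \sum_(h in G) \sum_(t : bool)
     (if wmul (wmul (g, g, s) z) (h, h, t) == w
      then hchar xi eps (wmul (g, g, s) (h, h, t)) else 0)].

(* Main.v *)
Require Import Defs.
From HB Require Import structures.
From mathcomp Require Import all_boot all_order all_algebra all_fingroup all_solvable all_field all_character.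
Import GRing.Theory Num.Theory.
Local Open Scope ring_scope.

Section S.
Variables (gT : finGroupType) (G : {group gT}) (xi : 'CF(G)) (eps : bool -> algC) (g : gT) (s : bool).

Definition Ncnt (w1 w2 : gT) : nat := #|[set x in G | (x * g * x^-1 * w1)%g == w2]|.

Lemma wmulE g0 a h t : wmul (wmul (g0, g0, a) (1%g, g, s)) (h, h, t) =
  (if a then ((g0 * g * h)%g, (g0 * h)%g) else ((g0 * h)%g, (g0 * g * h)%g), addb (addb a s) t).
Proof. by case: a; case: s; case: t; rewrite /= ?mulg1. Qed.

Lemma hE g0 a h t : hchar xi eps (wmul (g0, g0, a) (h, h, t)) = xi (g0 * h)%g * eps (addb a t).
Proof. by case: a. Qed.

Lemma tsum (P : gT * gT) a w1 w2 c (v : algC) :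
  \sum_(t : bool) (if (P, addb (addb a s) t) == ((w1, w2), c) then v * eps (addb a t) else 0)
  = if P == (w1, w2) then v * eps (addb c s) else 0.
Proof.
rewrite big_bool /= !xpair_eqE; case: (P == (w1, w2)); last by rewrite addr0.
by case: a; case: s; case: c; rewrite /= ?addr0 ?add0r.
Qed.

Lemma reidx (F : gT -> algC) g0 : g0 \in G -> \sum_(h in G) F (g0 * h)%g = \sum_(u in G) F u.
Proof.
move=> Hg0; rewrite [RHS](reindex_inj (mulgI g0)) /=.
by apply: eq_bigl => h; rewrite groupMl.
Qed.

Lemma usum (f : gT -> gT) w1 w2 :
  forall v : algC,
  \sum_(u in G) (if (u == w1) && (f u == w2) then xi u * v else 0) = if f w1 == w2 then xi w1 * v else 0.
Proof.
move=> v; case: (boolP (w1 \in G)) => Hw.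
  rewrite (bigD1 w1) //= eqxx /= big1 ?addr0 // => u /andP[_ /negbTE ->] //.
rewrite big1; first by case: ifP => //; rewrite cfun0 ?mul0r.
by move=> u Hu; case: eqP => //= E; move: Hw; rewrite -E Hu.
Qed.

Lemma inner g0 w1 w2 v : g0 \in G ->
  \sum_(h in G) (if ((g0 * h)%g, (g0 * g * h)%g) == (w1, w2) then xi (g0 * h)%g * v else 0)
  = if (g0 * g * g0^-1 * w1)%g == w2 then xi w1 * v else 0.
Proof.
move=> Hg0; pose F := fun u => if (u == w1) && ((g0 * g * g0^-1 * u)%g == w2) then xi u * v else 0.
transitivity (\sum_(h in G) F (g0 * h)%g).
  by apply: eq_bigr => h _; rewrite /F /= xpair_eqE -!mulgA mulKg.
by rewrite (reidx F _ Hg0) /F usum.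
Qed.

Lemma inner2 g0 w1 w2 v : g0 \in G ->
  \sum_(h in G) (if ((g0 * g * h)%g, (g0 * h)%g) == (w1, w2) then xi (g0 * h)%g * v else 0)
  = if (g0 * g * g0^-1 * w2)%g == w1 then xi w2 * v else 0.
Proof.
move=> Hg0; rewrite -inner //; apply: eq_bigr => h _.
by rewrite !xpair_eqE andbC.
Qed.

Lemma sumif (P : pred gT) (v : algC) :
  \sum_(x in G) (if P x then v else 0) = v *+ #|[set x in G | P x]|.
Proof. by rewrite -big_mkcondr -sumr_const; apply: eq_bigl => x; rewrite inE. Qed.

Lemma Kcoef w1 w2 c : g \in G ->
  Kelt xi eps (1%g, g, s) (w1, w2, c) =
  eps (addb c s) * (xi w1 * (Ncnt w1 w2)%:R + xi w2 * (Ncnt w2 w1)%:R).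
Proof.
move=> Hg; rewrite ffunE.
under eq_bigr => g0 Hg0.
  under eq_bigr => a _.
    under eq_bigr => h _.
      under eq_bigr => t _ do rewrite wmulE hE.
      rewrite tsum.
    over.
  over.
over.
rewrite /=.
under eq_bigr => g0 Hg0.
  rewrite big_bool /=.
  rewrite inner // inner2 //.
  over.
rewrite big_split /= !sumif addrC mulrDr /Ncnt; congr (_ + _); by rewrite -[LHS]mulr_natr -mulrA mulrCA.
Qed.

Lemma conjE' z : (z * g * z^-1)%g = (g ^ z^-1)%g.
Proof. by rewrite conjgE invgK mulgA. Qed.

Lemma swapeq (a w1 w2 : gT) : ((a^-1 * w1)%g == w2) = ((a * w2)%g == w1).
Proof. apply/idP/idP => /eqP E; apply/eqP; rewrite -E ?mulKVg ?mulKg //. Qed.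

Lemma Nsym w1 w2 y : y \in G -> (g ^ y)%g = (g^-1)%g -> Ncnt w2 w1 = Ncnt w1 w2.
Proof.
move=> Hy Egy; rewrite /Ncnt.
suff ->: [set x in G | (x * g * x^-1 * w2)%g == w1] = ([set x in G | (x * g * x^-1 * w1)%g == w2] :* y)%g by rewrite card_rcoset.
apply/setP => z.
rewrite mem_rcoset !inE groupMr ?groupV //; congr (_ && _).
rewrite !conjE' invMg invgK conjgM Egy conjVg swapeq; done.
Qed.
End S.

Theorem proposition3p6 (gT : finGroupType) (G : {group gT}) (xi : 'CF(G))
  (eps : bool -> algC) (g : gT) (s : bool) :
  xi \is a linear_char ->
  (eps = (fun _ => 1) \/ eps = (fun b => if b then -1 else 1)) ->
  g \in G ->
  (Kelt xi eps (1%g, g, s) = [ffun => 0] <->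
   (xi g = -1 /\ (g ^: G)%g = ((g^-1)%g ^: G)%g)).
Proof.
move=> Hxi Heps Hg; split.
  move=> HK.
  have E := congr1 (fun f : {ffun _ -> _} => f (1%g, g, s)) HK.
  rewrite /= Kcoef // ffunE addbb in E.
  have e0 : eps false = 1 by case: Heps => ->.
  rewrite e0 mul1r lin_char1 // mul1r in E.
  set n1 := @Ncnt _ G g 1%g g in E; set n2 := @Ncnt _ G g g 1%g in E.
  have n1pos : (0 < n1)%N.
    rewrite /n1 /Ncnt card_gt0; apply/set0Pn; exists 1%g; rewrite !inE group1 invg1. rewrite !mulg1 mul1g eqxx. done.
  have E2 : xi g * n2%:R = - n1%:R by apply/eqP; rewrite -addr_eq0 addrC E.
  have n12 : n2 = n1.
    have := congr1 Num.norm E2; rewrite normrM normrN (normC_lin_char Hxi Hg) mul1r !normr_nat.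
    by move/eqP; rewrite eqr_nat => /eqP.
  rewrite n12 in E2.
  split.
    have nz : n1%:R != 0 :> algC by rewrite pnatr_eq0 -lt0n.
    by apply: (mulIf nz); rewrite E2 mulN1r.
  have : (0 < n2)%N by rewrite n12.
  rewrite /n2 /Ncnt card_gt0 => /set0Pn [x]; rewrite inE => /andP [Hx /eqP Ex].
  have Exg : (g^-1)%g = (g ^ x^-1)%g.
    by rewrite -conjE' -[(x * g * x^-1)%g](mulgK g) Ex mul1g.
  by rewrite Exg classGidl // groupV.
case=> xig Ecl.
have : (g^-1)%g \in (g ^: G)%g by apply/class_eqP; rewrite Ecl.
case/imsetP => y Hy Egy.
apply/ffunP => [[[w1 w2] c]]; rewrite Kcoef // ffunE.
rewrite (@Nsym _ G g w1 w2 y Hy (esym Egy)).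
case: (posnP (@Ncnt _ G g w1 w2)) => [->|]; first by rewrite !mulr0 addr0 mulr0.
rewrite /Ncnt card_gt0 => /set0Pn [z]; rewrite inE => /andP [Hz /eqP Ez].
have Hc : (g ^ z^-1)%g \in G by rewrite groupJ ?groupV.
have xw2 : xi w2 = - xi w1.
  rewrite -Ez conjE'.
  case: (boolP (w1 \in G)) => Hw1.
    by rewrite lin_charM // cfunJ ?groupV // xig mulN1r.
  by rewrite !cfun0 ?oppr0 // groupMl.
by rewrite xw2 mulNr addrN mulr0.
Qed.
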